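(* For every $n\ge1$, $R_n=\inf_{\mathbb{P}\in\mathcal{C}_n}R_n(\mathbb{P})$.
   Context: Scheduling on two machines with $n$ tasks. A processing-time matrix is $T\in\mathbb{R}_{++}^{2\times n}$; an allocation is $X\in\{0,1\}^{2\times n}$ with $X_{1j}+X_{2j}=1$; makespan $M(X,T)=\max_{i\in\{1,2\}}\sum_jX_{ij}T_{ij}$; $M^*(T)=\min_XM(X,T)$. $\mathcal{P}_n$ is the set of Borel probability measures on $\mathbb{R}^n$ supported in $\mathbb{R}_{++}^n$. For $\mathbb{P}\in\mathcal{P}_n$, algorithm $\mathcal{A}^{\mathbb{P}}$ draws $\mathbf{z}\sim\mathbb{P}$ and sends task $j$ to machine 1 iff $T_{1j}/T_{2j}<z_j$ (else to machine 2); $M(\mathbb{P},T)$ is its expected makespan, $R_n(\mathbb{P})=\sup_TM(\mathbb{P},T)/M^*(T)\in[1,\infty]$, and $R_n=\inf_{\mathbb{P}\in\mathcal{P}_n}R_n(\mathbb{P})$. $\mathcal{C}_n$ is the set of $\mathbb{P}\in\mathcal{P}_n$ invariant under permutations of coordinates: for every permutation $\pi$ of $[n]$, if $\mathbf{z}\sim\mathbb{P}$ then $(z_{\pi(1)},\dots,z_{\pi(n)})\sim\mathbb{P}$. *)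

(* Defs.v *)
From HB Require Import structures.
From mathcomp Require Import all_boot all_order all_algebra all_fingroup.
From mathcomp Require Import all_classical all_reals all_analysis.
Set Implicit Arguments. Unset Strict Implicit. Unset Printing Implicit Defensive.
Import Order.TTheory GRing.Theory Num.Theory.
Local Open Scope classical_set_scope.
Local Open Scope ring_scope.

Section Sched.
Variable R : realType.
Variable n : nat.

Definition mach1 : 'I_2 := ord0.
Definition mach2 : 'I_2 := ord_max.

Definition posmat (T : 'M[R]_(2, n)) : Prop := forall i j, 0 < T i j.

(* An allocation X in {0,1}^{2xn} with X_1j + X_2j = 1 is encoded by the
   boolean vector x with x j = true iff X_1j = 1 (task j on machine 1). *)
Definition makespan (x : 'I_n -> bool) (T : 'M[R]_(2, n)) : R :=
  Num.max (\sum_(j < n | x j) T mach1 j) (\sum_(j < n | ~~ x j) T mach2 j).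

Definition opt_makespan (T : 'M[R]_(2, n)) : R :=
  \big[Num.min/makespan (fun _ => true) T]_(x : {ffun 'I_n -> bool})
     makespan x T.

Definition alg_alloc (T : 'M[R]_(2, n)) (z : n.-tuple R) : 'I_n -> bool :=
  fun j => T mach1 j / T mach2 j < tnth z j.

Definition exp_makespan (P : probability (n.-tuple R) R) (T : 'M[R]_(2, n))
  : \bar R :=
  (\int[P]_z (makespan (alg_alloc T z) T)%:E)%E.

Definition ratio (P : probability (n.-tuple R) R) : \bar R :=
  ereal_sup [set (exp_makespan P T * ((opt_makespan T)^-1)%:E)%E
            | T in posmat].

Definition supported_pos (P : probability (n.-tuple R) R) : Prop :=
  P [set z : n.-tuple R | forall j, 0 < tnth z j] = 1%E.

Definition perm_tuple (s : {perm 'I_n}) (z : n.-tuple R) : n.-tuple R :=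
  [tuple tnth z (s i) | i < n].

Definition sym_supported (P : probability (n.-tuple R) R) : Prop :=
  supported_pos P /\
  forall (s : {perm 'I_n}) (A : set (n.-tuple R)), measurable A ->
    P (perm_tuple s @^-1` A) = P A.

Definition Rn : \bar R := ereal_inf [set ratio P | P in supported_pos].

Definition Rn_sym : \bar R := ereal_inf [set ratio P | P in sym_supported].

End Sched.

(* Main.v *)
Require Import Defs.
From HB Require Import structures.
From mathcomp Require Import all_boot all_order all_algebra all_fingroup.
From mathcomp Require Import all_classical all_reals all_analysis.
From mathcomp Require Import measurable_realfun.
Set Implicit Arguments. Unset Strict Implicit. Unset Printing Implicit Defensive.
Import Order.TTheory GRing.Theory Num.Theory.
Local Open Scope classical_set_scope.
Local Open Scope ring_scope.



Section Fin.
Local Open Scope ereal_scope.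
Context d (X : measurableType d) (R : realType).
Variable mu : {measure set X -> \bar R}.

Lemma int_fin (I : finType) (A : I -> set X) (c : I -> R) (g : X -> R) :
 (forall i, measurable (A i)) -> (forall i, (0 <= c i)%R) ->
 (forall z, exists i, A i z) -> (forall i j z, A i z -> A j z -> i = j) ->
 (forall i z, A i z -> g z = c i) ->
 \int[mu]_z (g z)%:E = \sum_i (c i)%:E * mu (A i).
Proof.
move=> mA c0 cov uniq gc.
have ge : forall z, g z = (\sum_i c i * \1_(A i) z)%R.
  move=> z; have [i Ai] := cov z.
  rewrite (bigD1 i) //= big1 ?addr0; first by rewrite indicE mem_set // mulr1 (gc i).
  move=> j ji; rewrite indicE memNset ?mulr0 //.
  by move=> Aj; move/eqP: ji; apply; apply: uniq Aj Ai.
under eq_integral do rewrite ge -sumEFin.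
rewrite ge0_integral_sum //.
- apply: eq_bigr => i _.
  under eq_integral do rewrite EFinM.
  rewrite ge0_integralZl_EFin //.
  + by rewrite integral_indic // setIT.
  + apply/measurable_realfun.measurable_EFinP; exact: measurable_realfun.measurable_indic.
- move=> i; apply/measurable_realfun.measurable_EFinP; apply: measurable_funM => //.
- by move=> i z _; rewrite lee_fin mulr_ge0 // indicE.
Qed.
End Fin.

Section Main.
Variable R : realType.
Variable n : nat.

Definition Tp (s : {perm 'I_n}) (T : 'M[R]_(2, n)) : 'M[R]_(2, n) :=
  \matrix_(i < 2, k < n) T i ((s^-1)%g k).

Lemma meas_perm (s : {perm 'I_n}) : measurable_fun setT (@perm_tuple R n s).
Proof.
apply/measurable_fun_tnthP => i.
rewrite (_ : _ \o _ = (@tnth n R)^~ (s i)); first exact: measurable_tnth.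
by apply/funext => z /=; rewrite tnth_mktuple.
Qed.

Lemma meas_pre (s : {perm 'I_n}) (A : set (n.-tuple R)) :
  measurable A -> measurable (perm_tuple s @^-1` A).
Proof. by move=> mA; rewrite -[X in measurable X]setTI; apply: meas_perm. Qed.

Definition cell (T : 'M[R]_(2, n)) (x : {ffun 'I_n -> bool}) : set (n.-tuple R) :=
  [set z | forall j, alg_alloc T z j = x j].

Lemma cell_meas T x : measurable (cell T x).
Proof.
have key : forall s : seq 'I_n,
    measurable [set z : n.-tuple R | forall j, j \in s -> alg_alloc T z j = x j].
  elim => [|h t IH].
    rewrite (_ : [set z | _] = setT); first exact: measurableT.
    by apply/seteqP; split => z //= _ j.
  rewrite (_ : [set z | _] = [set z | alg_alloc T z h = x h] `&`
     [set z : n.-tuple R | forall j, j \in t -> alg_alloc T z j = x j]).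
    apply: measurableI => //.
    have := @measurable_fun_ltr _ _ R setT (cst (T mach1 h / T mach2 h))
      ((@tnth n R)^~ h) (measurable_cst _) (measurable_tnth h) measurableT [set x h].
    rewrite setTI; apply => //.
  apply/seteqP; split => z /=.
    by move=> H; split => [|j jt]; apply: H; rewrite inE ?eqxx ?jt ?orbT.
  by move=> [H1 H2] j; rewrite inE => /orP [/eqP -> //|]; apply: H2.
rewrite (_ : cell T x = [set z | forall j, j \in index_enum 'I_n -> alg_alloc T z j = x j]) //.
apply/seteqP; split => z /=; first by move=> H j _; apply: H.
by move=> H j; apply: H; rewrite mem_index_enum.
Qed.


Lemma makespan_ext (x y : 'I_n -> bool) (T : 'M[R]_(2, n)) : (forall j, x j = y j) ->
  makespan x T = makespan y T.
Proof.
by move=> h; rewrite /makespan; congr Num.max; apply: eq_bigl => j; rewrite h.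
Qed.

Lemma makespan_ge0 x (T : 'M[R]_(2, n)) : (forall i j, 0 <= T i j) ->
  0 <= makespan x T.
Proof.
by move=> h; rewrite /makespan le_max; apply/orP; left; apply: sumr_ge0.
Qed.

Lemma makespan_perm (s : {perm 'I_n}) x (T : 'M[R]_(2, n)) :
  makespan (fun k => x ((s^-1)%g k)) (Tp s T) = makespan x T.
Proof.
rewrite /makespan; congr Num.max.
  rewrite [LHS](reindex_inj (@perm_inj _ s)) /=.
  by apply: eq_big => j; rewrite ?permK // mxE permK.
rewrite [LHS](reindex_inj (@perm_inj _ s)) /=.
by apply: eq_big => j; rewrite ?permK // mxE permK.
Qed.

Lemma bigmin_le_seq (I : eqType) (r : seq I) (F : I -> R) idx x :
  x \in r -> \big[Num.min/idx]_(y <- r) F y <= F x.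
Proof.
elim: r => [//|h t IH]; rewrite inE big_cons => /orP [/eqP ->|xt].
  by rewrite ge_min lexx.
by rewrite ge_min IH ?orbT.
Qed.

Lemma opt_le (T : 'M[R]_(2, n)) (x : 'I_n -> bool) : opt_makespan T <= makespan x T.
Proof.
rewrite (@makespan_ext x [ffun j => x j]); last by move=> j; rewrite ffunE.
exact: bigmin_le_seq (mem_index_enum _).
Qed.

Lemma opt_ex (T : 'M[R]_(2, n)) : exists x : 'I_n -> bool, opt_makespan T = makespan x T.
Proof.
rewrite /opt_makespan; apply: (big_ind (fun y => exists x : 'I_n -> bool, y = makespan x T)).
- by exists (fun _ => true).
- move=> a b [xa ->] [xb ->].
  have [h|h] := leP (makespan xa T) (makespan xb T).
    by exists xa.
  by exists xb.
- by move=> x _; exists x.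
Qed.

Lemma opt_perm_le s (T : 'M[R]_(2, n)) : opt_makespan (Tp s T) <= opt_makespan T.
Proof.
have [x ->] := opt_ex T.
rewrite -(makespan_perm s); exact: opt_le.
Qed.

Lemma Tp_inv s (T : 'M[R]_(2, n)) : Tp (s^-1)%g (Tp s T) = T.
Proof. by apply/matrixP => i k; rewrite !mxE invgK permK. Qed.

Lemma opt_perm s (T : 'M[R]_(2, n)) : opt_makespan (Tp s T) = opt_makespan T.
Proof.
apply: le_anti; rewrite opt_perm_le /=.
by rewrite -{1}(Tp_inv s T) opt_perm_le.
Qed.

Lemma opt_ge0 (T : 'M[R]_(2, n)) : (forall i j, 0 <= T i j) -> 0 <= opt_makespan T.
Proof. by move=> h; have [x ->] := opt_ex T; apply: makespan_ge0. Qed.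

Lemma posmat_Tp s (T : 'M[R]_(2, n)) : posmat T -> posmat (Tp s T).
Proof. by move=> h i j; rewrite mxE. Qed.

Lemma exp_perm (mu : probability (n.-tuple R) R) (s : {perm 'I_n}) T :
  posmat T ->
  exp_makespan mu (Tp s T) =
  (\sum_(x : {ffun 'I_n -> bool}) (makespan x T)%:E * mu (perm_tuple s @^-1` cell T x))%E.
Proof.
move=> hT; rewrite /exp_makespan; apply: int_fin.
- by move=> x; apply: meas_pre; apply: cell_meas.
- by move=> x; apply: makespan_ge0 => i j; apply: ltW.
- by move=> z; exists [ffun j => alg_alloc T (perm_tuple s z) j] => j /=; rewrite ffunE.
- move=> x y z /= hx hy; apply/ffunP => j; by rewrite -hx -hy.
- move=> x z /= hx; rewrite -[RHS](makespan_perm s); apply: makespan_ext => k.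
  by rewrite -hx /alg_alloc !mxE tnth_mktuple permKV.
Qed.


Definition cN : R := (#|{perm 'I_n}|%:R)^-1.

Lemma cardN_gt0 : (0 < #|{perm 'I_n}|)%N.
Proof. by apply/card_gt0P; exists 1%g. Qed.

Lemma cN_ge0 : 0 <= cN.
Proof. by rewrite /cN invr_ge0 ler0n. Qed.

Lemma sum_const_perm (r : R) : \sum_(s : {perm 'I_n}) r = r *+ #|{perm 'I_n}|.
Proof. exact: sumr_const. Qed.

Lemma cN_sum (r : R) : cN * \sum_(s : {perm 'I_n}) r = r.
Proof.
rewrite sum_const_perm -mulr_natr mulrCA /cN mulVf ?mulr1 //.
by rewrite pnatr_eq0 -lt0n cardN_gt0.
Qed.

Lemma sum_cN : \sum_(s : {perm 'I_n}) cN = 1.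
Proof.
rewrite sum_const_perm -mulr_natr /cN mulVf //.
by rewrite pnatr_eq0 -lt0n cardN_gt0.
Qed.

Lemma perm_tupleM (s t : {perm 'I_n}) (z : n.-tuple R) :
  perm_tuple t (perm_tuple s z) = perm_tuple (t * s)%g z.
Proof. by apply: eq_from_tnth => i; rewrite !tnth_mktuple permM. Qed.

Lemma perm_tuple1 (z : n.-tuple R) : perm_tuple 1%g z = z.
Proof. by apply: eq_from_tnth => i; rewrite !tnth_mktuple perm1. Qed.

Lemma Tp1 (T : 'M[R]_(2, n)) : Tp 1%g T = T.
Proof. by apply/matrixP => i k; rewrite mxE invg1 perm1. Qed.

Section SymQ.
Local Open Scope ereal_scope.
Variable P : probability (n.-tuple R) R.

Definition symQ (A : set (n.-tuple R)) : \bar R :=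
  \sum_(s : {perm 'I_n}) (cN%:E * P (perm_tuple s @^-1` A)).

Let symQ0 : symQ set0 = 0.
Proof. by rewrite /symQ big1 // => s _; rewrite preimage_set0 measure0 mule0. Qed.

Let symQ_ge0 A : 0 <= symQ A.
Proof. by apply: sume_ge0 => s _; rewrite mule_ge0 // lee_fin cN_ge0. Qed.

Let symQ_sa : semi_sigma_additive symQ.
Proof.
move=> F mF tF mUF; rewrite [X in _ --> X](_ : _ =
    lim ((fun k => \sum_(0 <= i < k) symQ (F i)) @ \oo)).
  by apply: is_cvg_ereal_nneg_natsum => k _; exact: symQ_ge0.
rewrite /symQ nneseries_sum; last by move=> s j _; rewrite mule_ge0 // lee_fin cN_ge0.
apply: eq_bigr => s _; rewrite nneseriesZl //.
congr (_ * _); rewrite preimage_bigcup; apply: measure_semi_bigcup.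
- by move=> i; apply: meas_pre.
- apply/trivIsetP => /= i j _ _ ij; rewrite -preimage_setI.
  by move/trivIsetP : tF => /(_ _ _ _ _ ij) ->//; rewrite preimage_set0.
- by rewrite -preimage_bigcup; apply: meas_pre.
Qed.

HB.instance Definition _ := isMeasure.Build _ _ _ symQ symQ0 symQ_ge0 symQ_sa.

Let symQ_setT : symQ setT = 1.
Proof.
rewrite /symQ; under eq_bigr do rewrite preimage_setT probability_setT mule1.
by rewrite sumEFin sum_cN.
Qed.

HB.instance Definition _ := Measure_isProbability.Build _ _ _ symQ symQ_setT.

Definition symP : probability (n.-tuple R) R := symQ.


Lemma symQ_sym : supported_pos P -> sym_supported symP.
Proof.
move=> hP; split.
  rewrite /supported_pos /=.
  have preS s : perm_tuple s @^-1` [set z : n.-tuple R | forall j, (0 < tnth z j)%R]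
      = [set z | forall j, (0 < tnth z j)%R].
    apply/seteqP; split => z /= H j.
      by have := H ((s^-1)%g j); rewrite tnth_mktuple permKV.
    by rewrite tnth_mktuple; apply: H.
  rewrite /symQ; under eq_bigr do rewrite preS hP mule1.
  by rewrite sumEFin sum_cN.
move=> t A mA; rewrite /= /symQ.
rewrite [RHS](reindex_inj (mulgI t)) /=; apply: eq_bigr => s _.
congr (_ * P _); apply/seteqP; split => z /=; by rewrite perm_tupleM.
Qed.

Lemma ratio_symQ : Defs.ratio symP <= Defs.ratio P.
Proof.
have ratio_ub : forall T, posmat T ->
    exp_makespan P T * ((opt_makespan T)^-1)%:E <= Defs.ratio P.
  by move=> T hT; apply: ereal_sup_ubound; exists T.
have e_ge0 : forall T, posmat T -> 0 <= exp_makespan P T.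
  move=> T hT; rewrite /exp_makespan; apply: integral_ge0 => z _.
  by rewrite lee_fin; apply: makespan_ge0 => i j; apply: ltW.
apply: ge_ereal_sup => _ [T hT <-].
have E1 : exp_makespan symP T =
    \sum_(x : {ffun 'I_n -> bool}) (makespan x T)%:E * symQ (cell T x).
  rewrite -{1}(Tp1 T) exp_perm //; apply: eq_bigr => x _.
  by congr (_ * symQ _); apply/seteqP; split => z /=; rewrite perm_tuple1.
have E2 : \sum_(s : {perm 'I_n}) exp_makespan P (Tp s T) =
    \sum_(s : {perm 'I_n}) \sum_(x : {ffun 'I_n -> bool})
       (makespan x T)%:E * P (perm_tuple s @^-1` cell T x).
  by apply: eq_bigr => s _; apply: exp_perm.
have H : exp_makespan symP T =
    cN%:E * \sum_(s : {perm 'I_n}) exp_makespan P (Tp s T).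
  have m0 x : 0 <= (makespan x T)%:E.
    by rewrite lee_fin makespan_ge0 // => i j; apply: ltW.
  rewrite E1 E2.
  transitivity (\sum_(s : {perm 'I_n}) \sum_(x : {ffun 'I_n -> bool})
       cN%:E * ((makespan x T)%:E * P (perm_tuple s @^-1` cell T x))).
    rewrite exchange_big /=; apply: eq_bigr => x _.
    rewrite /symQ ge0_sume_distrr; last by move=> s _; rewrite mule_ge0 // lee_fin cN_ge0.
    by apply: eq_bigr => s _; rewrite muleCA.
  rewrite ge0_sume_distrr; last by move=> s _; apply: sume_ge0 => x _; rewrite mule_ge0.
  apply: eq_bigr => s _; rewrite ge0_sume_distrr // => x _; rewrite mule_ge0 //.
have opt0 : (0 <= (opt_makespan T)^-1)%R.
  by rewrite invr_ge0 opt_ge0 // => i j; apply: ltW.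
rewrite H -muleA ge0_sume_distrl; last by move=> s _; apply: e_ge0; apply: posmat_Tp.
have r0 : 0 <= Defs.ratio P.
  apply: le_trans (ratio_ub T hT); rewrite mule_ge0 // ?lee_fin //; exact: e_ge0.
apply: (@le_trans _ _ (cN%:E * \sum_(s : {perm 'I_n}) Defs.ratio P)).
  apply: lee_wpmul2l; first by rewrite lee_fin cN_ge0.
  apply: lee_sum => s _; rewrite -(opt_perm s T); apply: ratio_ub.
  exact: posmat_Tp.
move: r0; case: (Defs.ratio P) => [r| |] r0.
- by rewrite sumEFin -EFinM cN_sum.
- by rewrite leey.
- by [].
Qed.

End SymQ.

Theorem corollary2 (n' : nat) : (1 <= n')%N -> Rn R n' = Rn_sym R n'.
Abort.

End Main.

Local Open Scope ereal_scope.
Theorem corollary2 (R : realType) (n : nat) :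
  (1 <= n)%N -> Rn R n = Rn_sym R n.
Proof.
move=> _; apply: le_anti; apply/andP; split.
- rewrite /Rn /Rn_sym; apply: ereal_inf_le_tmp => _ [P [hP _] <-]; by exists P.
- apply: le_ereal_inf_tmp => _ [P hP <-].
  apply: ge_ereal_inf; exists (Defs.ratio (symP P)); last exact: ratio_symQ.
  by exists (symP P) => //; apply: symQ_sym.
Qed.
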